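(* Let $q$ be even, $G=\mathrm{SO}_{2m+1}(q)\cong\mathrm{Sp}_{2m}(q)$ acting on $V$ with nonsingular quadratic form $Q$, and let $g\in G$ be semisimple with $\dim C_V(g)\geq 2$. Then $g$ stabilizes a nondegenerate hyperplane of plus type and a nondegenerate hyperplane of minus type.
   Context: $V$ is a $(2m+1)$-dimensional $\mathbb F_q$-space and $Q$ is nonsingular, i.e. no nonzero vector of the radical $V^\perp$ of the associated bilinear form is singular; $V^\perp$ is $1$-dimensional and $G$ (the isometry group of $Q$) acts trivially on it. A nondegenerate hyperplane is a complement $W$ of $V^\perp$; $Q|_W$ is then nondegenerate and $W$ has a type (plus or minus, according to its Witt index). Stabilizers of nondegenerate hyperplanes of type $\pm$ correspond to the subgroups $\mathrm{SO}^{\pm}_{2m}(q)<\mathrm{Sp}_{2m}(q)$. *)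

(* Defs.v *)
From HB Require Import structures.
From mathcomp Require Import all_boot all_order all_algebra all_field.
Set Implicit Arguments. Unset Strict Implicit. Unset Printing Implicit Defensive.
Import Order.TTheory GRing.Theory Num.Theory.
Local Open Scope ring_scope.

(* Vectors are row vectors 'rV[F]_n, matrices act on the right (v *m g).
   Subspaces of F^n are represented as row spaces of square matrices. *)

Section QuadForms.
Variables (F : finFieldType) (n : nat).

Definition qform (A : 'M[F]_n) (v : 'rV[F]_n) : F := (v *m A *m v^T) 0 0.

(* matrix of the polar (associated bilinear) form b(u,v)=Q(u+v)-Q(u)-Q(v) *)
Definition polar_mx (A : 'M[F]_n) : 'M[F]_n := A + A^T.

Definition radical (A : 'M[F]_n) : 'M[F]_n := kermx (polar_mx A).

Definition nonsingular_qf (A : 'M[F]_n) : Prop :=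
  forall v : 'rV[F]_n, (v <= radical A)%MS -> qform A v = 0 -> v = 0.

Definition isometry_qf (A : 'M[F]_n) (g : 'M[F]_n) : Prop :=
  g \in unitmx /\ forall v : 'rV[F]_n, qform A (v *m g) = qform A v.

Definition fixed_space (g : 'M[F]_n) : 'M[F]_n := kermx (g - 1%:M).

Definition totally_singular (A : 'M[F]_n) (U : 'M[F]_n) : bool :=
  [forall v : 'rV[F]_n, (v <= U)%MS ==> (qform A v == 0)].

Definition witt_index (A : 'M[F]_n) (W : 'M[F]_n) : nat :=
  \max_(U : 'M[F]_n | (U <= W)%MS && totally_singular A U) \rank U.

(* nondegenerate hyperplane: a complement of the radical V^perp *)
Definition nondeg_hyperplane (A : 'M[F]_n) (W : 'M[F]_n) : Prop :=
  (W :&: radical A == (0 : 'M[F]_n))%MS /\ (W + radical A == 1%:M)%MS.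

End QuadForms.

(* semisimple element of GL_n over the (perfect) finite field F:
   its minimal polynomial is separable *)
Definition semisimple_mx (F : finFieldType) (n : nat) (g : 'M[F]_n.+1) : bool :=
  separable.separable_poly (mxminpoly g).

(* Main.v *)
Require Import Defs.
From HB Require Import structures.
From mathcomp Require Import all_boot all_order all_algebra all_field.
Import GRing.Theory.
Local Open Scope ring_scope.
From mathcomp Require Import ring zify.
From Stdlib Require Import Lia.
Set Implicit Arguments. Unset Strict Implicit. Unset Printing Implicit Defensive.

Section Basic.
Variables (F : finFieldType) (n : nat) (A : 'M[F]_n).
Hypothesis char2 : (2%N \in [pchar F]).

Definition bf (u v : 'rV[F]_n) : F := (u *m polar_mx A *m v^T) 0 0.
Definition perp (x : 'rV[F]_n) : 'M[F]_n := kermx (polar_mx A *m x^T).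
Local Notation Q := (qform A).

Lemma two0 : (2%:R : F) = 0.
Proof. exact: pcharf0 char2. Qed.

Lemma addxx (x : F) : x + x = 0.
Proof. by rewrite -mulr2n -mulr_natr two0 mulr0. Qed.

Lemma oppF (x : F) : - x = x.
Proof. by apply/eqP; rewrite eq_sym -subr_eq0 opprK addxx. Qed.

Lemma trmx11 (M : 'M[F]_1) : M^T 0 0 = M 0 0.
Proof. by rewrite mxE. Qed.

Lemma addE m p (M N : 'M[F]_(m,p)) i j : (M + N) i j = M i j + N i j.
Proof. by rewrite mxE. Qed.

Lemma scaleE m p c (M : 'M[F]_(m,p)) i j : (c *: M) i j = c * M i j.
Proof. by rewrite mxE. Qed.

Lemma tr11 (M : 'M[F]_1) : M^T = M.
Proof. by rewrite [M]mx11_scalar tr_scalar_mx. Qed.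

Lemma qformD u v : Q (u + v) = Q u + Q v + bf u v.
Proof.
rewrite /qform /bf /polar_mx linearD /= mulmxDr !mulmxDl mulmxDr mulmxDl.
have -> : v *m A *m u^T = u *m A^T *m v^T.
  by rewrite -[LHS]tr11 !trmx_mul trmxK mulmxA.
rewrite !addE; set a := (u *m A *m u^T) 0 0; set b := (u *m A *m v^T) 0 0.
set c := (u *m A^T *m v^T) 0 0; set d := (v *m A *m v^T) 0 0.
ring.
Qed.

Lemma qformZ c u : Q (c *: u) = c ^+ 2 * Q u.
Proof.
by rewrite /qform linearZ /= -scalemxAr -!scalemxAl !scaleE mulrA expr2.
Qed.

Lemma bfDl u v w : bf (u + v) w = bf u w + bf v w.
Proof. by rewrite /bf !mulmxDl addE. Qed.
Lemma bfDr u v w : bf u (v + w) = bf u v + bf u w.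
Proof. by rewrite /bf [(v + w)^T]linearD /= mulmxDr addE. Qed.
Lemma bfZl c u w : bf (c *: u) w = c * bf u w.
Proof. by rewrite /bf -!scalemxAl scaleE. Qed.
Lemma bfZr c u w : bf u (c *: w) = c * bf u w.
Proof. by rewrite /bf [(c *: w)^T]linearZ /= -scalemxAr scaleE. Qed.
Lemma bfC u v : bf u v = bf v u.
Proof.
rewrite /bf -trmx11 !trmx_mul trmxK mulmxA; congr ((_ *m _ *m _) 0 0).
by rewrite /polar_mx linearD /= trmxK addrC.
Qed.
Lemma addvv (u : 'rV[F]_n) : u + u = 0.
Proof. by rewrite -mulr2n -scaler_nat two0 scale0r. Qed.

Lemma qform0 : Q 0 = 0.
Proof. by rewrite /qform !mul0mx mxE. Qed.

Lemma bfxx u : bf u u = 0.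
Proof. by have := qformD u u; rewrite addvv qform0 addxx add0r => <-. Qed.
Lemma bf0l u : bf 0 u = 0. Proof. by rewrite /bf !mul0mx mxE. Qed.
Lemma bf0r u : bf u 0 = 0. Proof. by rewrite bfC bf0l. Qed.
Lemma bfNl u w : bf (- u) w = - bf u w.
Proof. by rewrite -scaleN1r bfZl mulN1r. Qed.
Lemma bfNr u w : bf u (- w) = - bf u w.
Proof. by rewrite -scaleN1r bfZr mulN1r. Qed.
Lemma bfBl u v w : bf (u - v) w = bf u w - bf v w.
Proof. by rewrite bfDl bfNl. Qed.
Lemma bfBr u v w : bf u (v - w) = bf u v - bf u w.
Proof. by rewrite bfDr bfNr. Qed.

Lemma perpP v x : reflect (bf v x = 0) (v <= perp x)%MS.
Proof.
apply: (iffP sub_kermxP) => [H|H].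
  by rewrite /bf -mulmxA H mxE.
by rewrite mulmxA (mx11_scalar (_ *m _)) -/(bf v x) H raddf0.
Qed.

End Basic.


Section Sub.
Variables (F : finFieldType) (n : nat).
Implicit Types (v x : 'rV[F]_n).

Lemma addv_rank k (M : 'M[F]_(k, n)) v :
  ~~ (v <= M)%MS -> \rank (M + v)%MS = (\rank M).+1.
Proof.
move=> nvM; have := mxrank_sum_cap M v.
have v0 : v != 0 by apply: contraNneq nvM => ->; rewrite sub0mx.
rewrite rank_rV v0.
have -> : \rank (M :&: v)%MS = 0%N.
  apply/eqP; apply: contraNT nvM; rewrite -lt0n => r0.
  have le1 : (\rank (M :&: v)%MS <= \rank v)%N by rewrite mxrankS ?capmxSr.
  have : (v <= M :&: v)%MS.
    by rewrite -(mxrank_leqif_sup (capmxSr M v)); apply/eqP/anti_leq;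
       rewrite le1 rank_rV v0.
  by rewrite sub_capmx => /andP[].
by rewrite addn0 addn1.
Qed.

Lemma sub_addv k (M : 'M[F]_(k, n)) x v :
  (x <= M + v)%MS -> exists a, exists c : F, (a <= M)%MS /\ x = a + c *: v.
Proof.
case/sub_addsmxP=> u ->; exists (u.1 *m M), (u.2 0 0); split; first exact: submxMl.
by rewrite {1}[u.2]mx11_scalar mul_scalar_mx.
Qed.

Lemma exists_notsub k l (M : 'M[F]_(k, n)) (N : 'M[F]_(l, n)) :
  ~~ (M <= N)%MS -> exists v : 'rV[F]_n, (v <= M)%MS /\ ~~ (v <= N)%MS.
Proof. by case/row_subPn=> i Hi; exists (row i M); rewrite row_sub. Qed.

Lemma rank_cap_ker k (S : 'M[F]_(k, n)) (c : 'cV[F]_n) :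
  (\rank S <= (\rank (S :&: kermx c)%MS).+1)%N.
Proof.
have := mxrank_sum_cap S (kermx c); rewrite mxrank_ker.
have := rank_leq_col (S + kermx c)%MS; have := rank_leq_col c.
lia.
Qed.

End Sub.


Section Witt.
Variables (F : finFieldType) (n : nat) (A : 'M[F]_n).
Hypothesis char2 : (2%N \in [pchar F]).
Local Notation Q := (qform A).
Local Notation bf := (bf A).
Implicit Types (v w x e f : 'rV[F]_n) (U W S : 'M[F]_n).

Lemma tsP U : reflect (forall v, (v <= U)%MS -> Q v = 0) (totally_singular A U).
Proof.
apply: (iffP forallP) => [H v vU|H v]; first by apply/eqP; have := H v; rewrite vU.
by apply/implyP => /H ->.
Qed.

Lemma witt_ge U W : (U <= W)%MS -> totally_singular A U -> (\rank U <= witt_index A W)%N.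
Proof. by move=> UW tU; apply: (leq_bigmax_cond U) => /=; rewrite UW tU. Qed.

Lemma witt_leP W k :
  (forall U, (U <= W)%MS -> totally_singular A U -> \rank U <= k)%N ->
  (witt_index A W <= k)%N.
Proof. by move=> H; apply/bigmax_leqP => U /andP[UW tU]; apply: H. Qed.

Lemma witt_ex W : exists U, [/\ (U <= W)%MS, totally_singular A U & \rank U = witt_index A W].
Proof.
set P := [pred U : 'M[F]_n | (U <= W)%MS && totally_singular A U].
have Hc : (0 < #|P|)%N.
  apply/card_gt0P; exists 0; rewrite inE sub0mx /=; apply/tsP => v.
  by rewrite submx0 => /eqP ->; rewrite qform0.
have [U0 UP E] := @eq_bigmax_cond _ P (fun U => \rank U) Hc.
by move: UP; rewrite inE => /andP[h1 h2]; exists U0; split.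
Qed.

Lemma bf_sing_ts U u w : totally_singular A U -> (u <= U)%MS -> (w <= U)%MS -> bf u w = 0.
Proof.
move=> /tsP tU uU wU; have := qformD A u w.
rewrite tU ?addmx_sub // tU // tU // !add0r => H; exact: esym H.
Qed.

Lemma sub_ts U V : (V <= U)%MS -> totally_singular A U -> totally_singular A V.
Proof. by move=> VU /tsP tU; apply/tsP => v vV; apply: tU (submx_trans vV VU). Qed.

Lemma ts_adde U e : totally_singular A U -> Q e = 0 ->
  (forall u, (u <= U)%MS -> bf u e = 0) -> totally_singular A (U + e)%MS.
Proof.
move=> /tsP tU Qe Ho; apply/tsP => v /sub_addv[a [c [aU ->]]].
by rewrite qformD qformZ Qe tU // bfZr Ho // !mulr0 !addr0.
Qed.

Lemma witt_hyp W W' e f : Q e = 0 -> Q f = 0 -> bf e f = 1 ->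
  (W' <= W)%MS -> (e <= W)%MS -> (f <= W)%MS ->
  (forall w, (w <= W')%MS -> bf w e = 0 /\ bf w f = 0) ->
  (W <= W' + e + f)%MS -> witt_index A W = (witt_index A W').+1.
Proof.
move=> Qe Qf Bef W'W eW fW Ho WS.
have eW' : ~~ (e <= W')%MS.
  by apply/negP => /Ho[_]; rewrite Bef; apply/eqP; exact: oner_neq0.
apply/eqP; rewrite eqn_leq; apply/andP; split; last first.
  have [U' [U'W' tU' rU']] := witt_ex W'.
  have eU' : ~~ (e <= U')%MS by apply: contra eW' => h; exact: submx_trans h U'W'.
  rewrite -rU' -(addv_rank eU'); apply: witt_ge.
    by rewrite addsmx_sub eW (submx_trans U'W' W'W).
  by apply: ts_adde => // u uU; case: (Ho u (submx_trans uU U'W')).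
apply: witt_leP => U UW tU.
set Z := ((U :&: perp A e) + e)%MS.
have tZ : totally_singular A Z.
  apply: ts_adde => //; first exact: sub_ts (capmxSl _ _) tU.
  by move=> u; rewrite sub_capmx => /andP[_ /perpP].
have rUZ : (\rank U <= \rank Z)%N.
  have [eU|eU] := boolP (e <= U)%MS.
    have UC : (U <= U :&: perp A e)%MS.
      rewrite sub_capmx submx_refl /=; apply/row_subP => i; apply/perpP.
      exact: bf_sing_ts tU (row_sub i U) eU.
    apply: leq_trans (mxrankS UC) (mxrankS (addsmxSl _ _)).
  rewrite /Z addv_rank; first exact: rank_cap_ker.
  by apply: contra eU; rewrite sub_capmx => /andP[].
have ZW : (Z <= W)%MS by rewrite addsmx_sub eW andbT (submx_trans (capmxSl _ _) UW).
have ZZ : (Z <= (Z :&: W') + e)%MS.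
  apply/row_subP => i; set z := row i Z.
  have zZ : (z <= Z)%MS := row_sub i Z.
  have bze : bf z e = 0.
    move: zZ => /sub_addv[a [c [aC ->]]].
    by move: aC; rewrite sub_capmx => /andP[_ /perpP]; rewrite bfDl bfZl bfxx // mulr0 addr0.
  have := submx_trans zZ (submx_trans ZW WS).
  case/sub_addv=> y [be [yS zE]]; case/sub_addv: yS => w' [al [w'W' yE]].
  have be0 : be = 0.
    move: bze; rewrite zE yE !bfDl !bfZl bfxx // (bfC A f e) Bef.
    by case: (Ho _ w'W') => -> _; rewrite mulr0 !add0r mulr1.
  have -> : z = w' + al *: e by rewrite zE yE be0 scale0r addr0.
  apply: addmx_sub_adds; last by rewrite scalemx_sub.
  rewrite sub_capmx w'W' andbT.
  have -> : w' = z - al *: e by rewrite zE yE be0 scale0r addr0 addrK.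
  by rewrite addmx_sub // ?eqmx_opp scalemx_sub // addsmxSr.
apply: leq_trans rUZ _.
apply: leq_trans (mxrankS ZZ) _.
apply: leq_trans (mxrank_adds_leqif _ _) _.
have h : (\rank (Z :&: W')%MS <= witt_index A W')%N.
  by apply: witt_ge; [exact: capmxSr | exact: sub_ts (capmxSl _ _) tZ].
by rewrite rank_rV; case: (e != 0) => /=; lia.
Qed.

Lemma witt0 W : (forall v, (v <= W)%MS -> Q v = 0 -> v = 0) -> witt_index A W = 0%N.
Proof.
move=> H; apply/eqP; rewrite -leqn0; apply: witt_leP => U UW /tsP tU.
rewrite leqn0 mxrank_eq0 -submx0; apply/row_subP => i; rewrite submx0; apply/eqP.
apply: H; [exact: submx_trans (row_sub i U) UW | exact: tU (row_sub i U)].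
Qed.

Lemma sq_inj : injective (fun x : F => x ^+ 2).
Proof.
move=> x y /= E.
have h : x + y = 0.
  have : (x + y) ^+ 2 == 0.
    by rewrite sqrrD E -mulr_natr two0 // mulr0 addr0 addxx.
  by rewrite expf_eq0 /= => /eqP.
by rewrite -[x](addrK y) h sub0r oppF.
Qed.

Lemma sqrtF (a : F) : exists z : F, z ^+ 2 = a.
Proof. by exists (invF sq_inj a); rewrite (f_invF sq_inj). Qed.

Lemma AS_exists : exists c : F, forall t : F, t ^+ 2 + t != c.
Proof.
have [H|H] := boolP [exists c : F, [forall t : F, t ^+ 2 + t != c]].
  by case/existsP: H => c /forallP Hc; exists c.
pose h c := odflt 0 [pick t : F | t ^+ 2 + t == c].
have hK : forall c, (h c) ^+ 2 + h c = c.
  move=> c; rewrite /h; case: pickP => [t /eqP //|Hn].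
  case/negP: H; apply/existsP; exists c; apply/forallP => t; exact: negbT (Hn t).
have hinj : injective h by move=> c1 c2 E; rewrite -(hK c1) -(hK c2) E.
have hKi : forall z : F, h (z ^+ 2 + z) = z.
  by move=> z; have e : h (invF hinj z) = z := f_invF hinj z; rewrite -{1 2}e hK.
have : h (0 ^+ 2 + 0) = h (1 ^+ 2 + 1) by rewrite expr1n addxx // expr0n add0r.
rewrite !hKi => /eqP; rewrite eq_sym oner_eq0 //.
Qed.

Definition nd (S : 'M[F]_n) := forall v, (v <= S)%MS ->
  (forall w, (w <= S)%MS -> bf v w = 0) -> v = 0.

Lemma sing_exists S : (3 <= \rank S)%N -> exists e, [/\ (e <= S)%MS, e != 0 & Q e = 0].
Proof.
move=> r3.
have : ~~ (S <= (0 : 'M_n))%MS.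
  by rewrite submx0 -mxrank_eq0; apply: contraTN r3 => /eqP ->.
case/exists_notsub => u [uS]; rewrite submx0 => u0.
have [Qu|Qu] := eqVneq (Q u) 0; first by exists u.
set T := (S :&: perp A u)%MS.
have rT : (2 <= \rank T)%N.
  have := rank_cap_ker S (polar_mx A *m u^T); rewrite -/(perp A u) -/T; lia.
have : ~~ (T <= u)%MS.
  apply: contraTN rT => /mxrankS; rewrite rank_rV; case: (u != 0) => /=; lia.
case/exists_notsub => v [vT vu].
have [vS /perpP bvu] : (v <= S)%MS /\ (v <= perp A u)%MS by move: vT; rewrite sub_capmx => /andP.
have [l hl] := sqrtF (Q v / Q u).
exists (l *: u + v); split.
- by rewrite addmx_sub ?scalemx_sub.
- apply: contra vu => /eqP E; have -> : v = - (l *: u) by apply/eqP; rewrite -addr_eq0 addrC E.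
  by rewrite eqmx_opp scalemx_sub.
- rewrite qformD qformZ hl divfK // bfZl bfC bvu mulr0 addr0 addxx //.
Qed.

Lemma pair_make S e w : (e <= S)%MS -> Q e = 0 -> (w <= S)%MS -> bf e w != 0 ->
  exists f, [/\ (f <= S)%MS, Q f = 0 & bf e f = 1].
Proof.
move=> eS Qe wS bw.
set f0 := (bf e w)^-1 *: w.
have b1 : bf e f0 = 1 by rewrite bfZr mulVf.
exists (f0 + Q f0 *: e); split.
- by rewrite addmx_sub ?scalemx_sub.
- by rewrite qformD qformZ Qe mulr0 addr0 bfZr bfC b1 mulr1 addxx.
- by rewrite bfDr bfZr bfxx // mulr0 addr0.
Qed.

Lemma split_pair S e f : (e <= S)%MS -> (f <= S)%MS -> bf e f = 1 ->
  [/\ (S :&: perp A e :&: perp A f <= S)%MS,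
      (S <= (S :&: perp A e :&: perp A f) + e + f)%MS,
      (forall v, (v <= S :&: perp A e :&: perp A f)%MS -> bf v e = 0 /\ bf v f = 0) &
      \rank S = (\rank (S :&: perp A e :&: perp A f)%MS).+2].
Proof.
move=> eS fS bef; set S' := (S :&: perp A e :&: perp A f)%MS.
have S'S : (S' <= S)%MS by rewrite /S' -capmxA capmxSl.
have orth : forall v, (v <= S')%MS -> bf v e = 0 /\ bf v f = 0.
  by move=> v; rewrite /S' !sub_capmx => /andP[/andP[_ /perpP ->] /perpP ->].
have bfe : bf f e = 1 by rewrite bfC.
have dec : (S <= S' + e + f)%MS.
  apply/row_subP => i; set s := row i S; have sS : (s <= S)%MS := row_sub i S.
  set s' := s - bf s f *: e - bf s e *: f.
  have -> : s = s' + bf s f *: e + bf s e *: f by rewrite /s' addrAC !subrK.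
  apply: addmx_sub_adds; [apply: addmx_sub_adds|]; rewrite ?scalemx_sub //.
  rewrite /S' !sub_capmx -andbA; apply/and3P; split.
  - by rewrite /s' !addmx_sub ?eqmx_opp ?scalemx_sub.
  - by apply/perpP; rewrite /s' !bfBl !bfZl bfxx // bfe mulr0 mulr1 subr0 subrr.
  - by apply/perpP; rewrite /s' !bfBl !bfZl bfxx // bef mulr0 mulr1 subr0 subrr.
have eS' : ~~ (e <= S')%MS.
  by apply/negP => /orth[_]; rewrite bef; apply/eqP; exact: oner_neq0.
have fS' : ~~ (f <= S' + e)%MS.
  apply/negP => /sub_addv[a [c [aS E]]]; have := bfe.
  rewrite E bfDl bfZl bfxx // mulr0 addr0; case: (orth a aS) => -> _ /eqP.
  by rewrite eq_sym oner_eq0.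
split => //.
have ES : (S :=: S' + e + f)%MS.
  by apply/eqmxP; rewrite dec !addsmx_sub S'S eS fS.
by rewrite ES !addv_rank.
Qed.

Lemma sub_add3 k (M : 'M[F]_(k, n)) e f x : (x <= M + e + f)%MS ->
  exists a, exists al : F, exists be : F, (a <= M)%MS /\ x = a + al *: e + be *: f.
Proof.
case/sub_addv=> y [be [yS ->]]; case/sub_addv: yS => a [al [aM ->]].
by exists a, al, be.
Qed.

Lemma sub2P e f x : (x <= e + f)%MS -> exists al : F, exists be : F, x = al *: e + be *: f.
Proof.
case/sub_addv=> a [be [/sub_rVP[al ->] ->]]; by exists al, be.
Qed.

Lemma perp_lift S S' e f v : (S <= S' + e + f)%MS -> bf v e = 0 -> bf v f = 0 ->
  (forall w, (w <= S')%MS -> bf v w = 0) -> forall w, (w <= S)%MS -> bf v w = 0.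
Proof.
move=> dec ve vf H w /(submx_trans)/(_ dec)/sub_add3[a [al [be [aS ->]]]].
by rewrite !bfDr !bfZr ve vf H // !mulr0 !addr0.
Qed.

Lemma adjust r z (a : F) : Q r != 0 -> (forall w, bf r w = 0) ->
  exists ph : F, Q (z + ph *: r) = a.
Proof.
move=> Qr rad; have [ph hph] := sqrtF ((a - Q z) / Q r).
exists ph; rewrite qformD qformZ hph divfK // bfZr bfC rad mulr0 addr0.
by rewrite addrC subrK.
Qed.

Lemma aniso_plane x y (c : F) : (forall t : F, t ^+ 2 + t != c) ->
  Q x = 1 -> Q y = c -> bf x y = 1 ->
  forall v, (v <= x + y)%MS -> Q v = 0 -> v = 0.
Proof.
move=> AS Qx Qy bxy v /sub2P[al [be ->]].
rewrite qformD !qformZ Qx Qy mulr1 bfZl bfZr bxy mulr1.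
have [->|be0] := eqVneq be 0.
  rewrite scale0r addr0 expr0n /= mul0r mulr0 !addr0 => /eqP.
  by rewrite expf_eq0 /= => /eqP ->; rewrite scale0r.
move=> E; case/negP: (AS (al / be)); apply/eqP.
have h : (al / be) ^+ 2 + al / be + c = (al ^+ 2 + be ^+ 2 * c + al * be) / be ^+ 2.
  by field.
by move: h; rewrite E mul0r => /eqP; rewrite addr_eq0 oppF // => /eqP.
Qed.

End Witt.


Lemma subL (F : fieldType) n k1 k2 k3 (x : 'M[F]_(k1,n)) (P : 'M_(k2,n)) (R : 'M_(k3,n)) :
  (x <= P)%MS -> (x <= P + R)%MS.
Proof. by move=> h; apply: submx_trans h (addsmxSl P R). Qed.
Lemma subR (F : fieldType) n k1 k2 k3 (x : 'M[F]_(k1,n)) (P : 'M_(k2,n)) (R : 'M_(k3,n)) :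
  (x <= R)%MS -> (x <= P + R)%MS.
Proof. by move=> h; apply: submx_trans h (addsmxSr P R). Qed.

Ltac subsum := match goal with
 | |- is_true (?x <= ?x)%MS => exact: (submx_refl x)
 | |- is_true (0 <= _)%MS => exact: sub0mx
 | |- is_true (addsmx ?P ?R <= ?M)%MS =>
     rewrite addsmx_sub; apply/andP; split; subsum
 | |- is_true (?x <= addsmx ?P ?R)%MS =>
     first [ apply: subL; subsum | apply: subR; subsum ]
 | H : is_true (?x <= ?y)%MS |- is_true (?x <= ?y)%MS => exact H
end.

Section Mirror.
Variables (F : finFieldType) (n : nat) (A : 'M[F]_n).
Hypothesis char2 : (2%N \in [pchar F]).
Local Notation Q := (qform A).
Local Notation bf := (bf A).
Local Notation bfxx' := (bfxx A char2).
Local Notation addxx' := (addxx char2).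
Implicit Types (v w x e f r : 'rV[F]_n) (U W S C D X : 'M[F]_n).

Lemma sub_comb (T : 'M[F]_n) (a b : 'rV[F]_n) (c : F) : (a <= T)%MS -> (b <= T)%MS -> (a - c *: b <= T)%MS.
Proof. by move=> aT bT; rewrite addmx_sub ?eqmx_opp ?scalemx_sub. Qed.

Lemma mirror_witt x y u v D : bf x y = 1 -> bf u v = 1 -> Q x = Q u -> Q y = Q v ->
  bf x u = 0 -> bf x v = 0 -> bf y u = 0 -> bf y v = 0 ->
  (D <= u + v)%MS -> (u <= D)%MS -> (v <= D)%MS ->
  witt_index A ((x + y) + D)%MS = 2%N.
Proof.
move=> bxy buv Qxu Qyv bxu bxv byu byv DS uD vD.
have byx : bf y x = 1 by rewrite bfC.
have bvu : bf v u = 1 by rewrite bfC.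
have bux : bf u x = 0 by rewrite bfC.
have bvx : bf v x = 0 by rewrite bfC.
have buy : bf u y = 0 by rewrite bfC.
have bvy : bf v y = 0 by rewrite bfC.
set al := Q u; set be := Q v.
set e1 := x + u; set f1 := y + be *: e1; set e2 := y + v; set f2 := u + al *: e2.
have Qe1 : Q e1 = 0 by rewrite /e1 qformD Qxu bxu addr0 addxx'.
have Qe2 : Q e2 = 0 by rewrite /e2 qformD Qyv byv addr0 addxx'.
have bye1 : bf y e1 = 1 by rewrite /e1 bfDr byx byu addr0.
have bue2 : bf u e2 = 1 by rewrite /e2 bfDr buy buv add0r.
have Qf1 : Q f1 = 0 by rewrite /f1 qformD qformZ Qyv Qe1 bfZr bye1 mulr0 addr0 mulr1 addxx'.
have Qf2 : Q f2 = 0 by rewrite /f2 qformD qformZ Qe2 bfZr bue2 mulr0 addr0 mulr1 addxx'.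
have be1f1 : bf e1 f1 = 1.
  by rewrite /f1 bfDr bfZr bfxx' mulr0 addr0 /e1 bfDl bxy buy addr0.
have be2f2 : bf e2 f2 = 1.
  by rewrite /f2 bfDr bfZr bfxx' mulr0 addr0 /e2 bfDl byu bvu add0r.
have be2e1 : bf e2 e1 = 0 by rewrite /e2 /e1 !bfDl !bfDr byx byu bvx bvu addr0 add0r addxx'.
have be2f1 : bf e2 f1 = 0.
  by rewrite /f1 bfDr bfZr be2e1 mulr0 addr0 /e2 bfDl bfxx' bvy addr0.
have bf2e1 : bf f2 e1 = 0.
  by rewrite /f2 bfDl bfZl be2e1 mulr0 addr0 /e1 bfDr bux bfxx' addr0.
have bf2f1 : bf f2 f1 = 0.
  rewrite /f1 bfDr bfZr bf2e1 mulr0 addr0 /f2 bfDl bfZl buy add0r.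
  by rewrite /e2 bfDl bfxx' bvy addr0 mulr0.
set T := ((e2 + f2) + e1 + f1)%MS.
have e1T : (e1 <= T)%MS by rewrite /T; subsum.
have f1T : (f1 <= T)%MS by rewrite /T; subsum.
have e2T : (e2 <= T)%MS by rewrite /T; subsum.
have f2T : (f2 <= T)%MS by rewrite /T; subsum.
have uT : (u <= T)%MS by rewrite (_ : u = f2 - al *: e2) ?sub_comb // /f2 addrK.
have yT : (y <= T)%MS by rewrite (_ : y = f1 - be *: e1) ?sub_comb // /f1 addrK.
have xT : (x <= T)%MS by rewrite (_ : x = e1 - 1 *: u) ?sub_comb // scale1r /e1 addrK.
have vT : (v <= T)%MS by rewrite (_ : v = e2 - 1 *: y) ?sub_comb // scale1r /e2 addrAC subrr add0r.
have W2 : witt_index A (e2 + f2)%MS = 1%N.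
  rewrite (@witt_hyp _ _ _ char2 _ (0 : 'M[F]_n) e2 f2) //; try subsum.
  - by rewrite (witt0 (W := 0)) // => z; rewrite submx0 => /eqP.
  - by move=> z; rewrite submx0 => /eqP ->; rewrite !bf0l.
have xyDW : ((x + y) + D <= T)%MS.
  by rewrite !addsmx_sub xT yT (submx_trans DS) // addsmx_sub uT vT.
set W := ((x + y) + D)%MS.
have xW : (x <= W)%MS by rewrite /W; subsum.
have yW : (y <= W)%MS by rewrite /W; subsum.
have uW : (u <= W)%MS by rewrite /W; apply: subR.
have vW : (v <= W)%MS by rewrite /W; apply: subR.
have e1W : (e1 <= W)%MS by rewrite addmx_sub.
have e2W : (e2 <= W)%MS by rewrite addmx_sub.
have f1W : (f1 <= W)%MS by rewrite addmx_sub ?scalemx_sub.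
have f2W : (f2 <= W)%MS by rewrite addmx_sub ?scalemx_sub.
rewrite (@witt_hyp _ _ _ char2 _ (e2 + f2)%MS e1 f1) ?W2 //.
- by rewrite addsmx_sub e2W f2W.
- move=> z /sub2P[g [h ->]]; rewrite !bfDl !bfZl be2e1 be2f1 bf2e1 bf2f1.
  by rewrite !mulr0 addr0.
Qed.
End Mirror.


Section Main.
Variables (F : finFieldType) (n : nat) (A : 'M[F]_n).
Hypothesis char2 : (2%N \in [pchar F]).
Local Notation Q := (qform A).
Local Notation bf := (bf A).
Local Notation bfxx' := (bfxx A char2).
Implicit Types (v w x e f r : 'rV[F]_n) (U W S C D X : 'M[F]_n).

Definition goodX r C D (k : nat) (dl : bool) :=
  exists X, [/\ (X <= C)%MS, ~~ (r <= X)%MS, (C <= X + r)%MS &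
              witt_index A (X + D)%MS = (k - dl)%N].

Lemma nonzero_pair S e : nd A S -> (e <= S)%MS -> e != 0 ->
  exists w, (w <= S)%MS /\ bf e w != 0.
Proof.
move=> ndS eS e0.
have [H|H] := boolP [exists w : 'rV[F]_n, (w <= S)%MS && (bf e w != 0)].
  by case/existsP: H => w /andP[wS bw]; exists w.
case/eqP: e0; apply: ndS => // w wS; apply/eqP; apply: contraNT H => bw.
by apply/existsP; exists w; rewrite wS.
Qed.

Lemma main_ind r : Q r != 0 -> (forall w, bf r w = 0) ->
  forall N C D, (\rank C + \rank D <= N)%N -> (r <= C)%MS ->
  (forall c d, (c <= C)%MS -> (d <= D)%MS -> bf c d = 0) ->
  (forall c, (c <= C)%MS -> (forall c', (c' <= C)%MS -> bf c c' = 0) -> (c <= r)%MS) ->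
  nd A D -> (2 <= \rank C)%N ->
  forall k, (\rank C + \rank D)%N = k.*2.+1 -> forall dl : bool, goodX r C D k dl.
Proof.
move=> Qr rad; elim=> [|N IH] C D hN rC CD radC ndD r2 k hk dl; first by move: hN r2; clear; lia.
have r0 : r != 0 by apply: contraNneq Qr => ->; rewrite qform0.
have [r4|r4] := leqP 4 (\rank C).
  (* split a hyperbolic pair off C *)
  have [e [eC e0 Qe]] := sing_exists A char2 (ltnW r4).
  have [w [wC bw]] : exists w, (w <= C)%MS /\ bf e w != 0.
    have [H|H] := boolP [exists w : 'rV[F]_n, (w <= C)%MS && (bf e w != 0)].
      by case/existsP: H => w /andP[wC bw]; exists w.
    case/negP: e0; have : (e <= r)%MS.
      apply: radC => // w wC; apply/eqP; apply: contraNT H => bw.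
      by apply/existsP; exists w; rewrite wC.
    case/sub_rVP=> c Ee; move: Qe; rewrite Ee qformZ => /eqP.
    rewrite mulf_eq0 (negbTE Qr) orbF expf_eq0 /= => /eqP ->.
    by rewrite scale0r.
  have [f [fC Qf bef]] := pair_make char2 eC Qe wC bw.
  have [C'C dec orth rk] := split_pair char2 eC fC bef.
  set C' := (C :&: perp A e :&: perp A f)%MS in C'C dec orth rk.
  have rC' : (r <= C')%MS.
    by rewrite /C' !sub_capmx rC; apply/andP; split; [apply/andP; split=> //|]; apply/perpP.
  have hN' : (\rank C' + \rank D <= N)%N by move: hN rk; clear; lia.
  have r2' : (2 <= \rank C')%N by move: r4 rk; clear; lia.
  have hk' : (\rank C' + \rank D)%N = (k.-1).*2.+1 by move: hk rk r4; clear; lia.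
  have [X' [X'C' rX' C'X' wX']] := IH C' D hN' rC'
    (fun c d cC dD => CD c d (submx_trans cC C'C) dD)
    (fun c cC H => radC c (submx_trans cC C'C)
       (perp_lift dec (proj1 (orth c cC)) (proj2 (orth c cC)) H))
    ndD r2' k.-1 hk' dl.
  exists (X' + e + f)%MS; split.
  + by rewrite !addsmx_sub eC fC (submx_trans X'C' C'C).
  + apply/negP => /sub_add3[a [al [be [aX E]]]].
      have aC' := submx_trans aX X'C'.
      have h1 := congr1 (fun z => bf z e) E; have h2 := congr1 (fun z => bf z f) E.
      move: h1 h2 => /=; rewrite !bfDl !bfZl !bfxx' bef (bfC A f e) bef.
      rewrite (proj1 (orth a aC')) (proj2 (orth a aC')) !rad !mulr0 !mulr1 !add0r !addr0.
      move=> be0 al0; move: E; rewrite -be0 -al0 !scale0r !addr0 => E.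
      by case/negP: rX'; rewrite E.
  + apply: submx_trans dec _; rewrite !addsmx_sub -andbA; apply/and3P; split; try subsum.
    apply: submx_trans C'X' _; rewrite addsmx_sub; apply/andP; split; subsum.
  + rewrite (@witt_hyp _ _ _ char2 _ (X' + D)%MS e f) //.
    * by rewrite wX'; move: hk rk r4; clear; case: dl; lia.
    * by subsum.
    * by subsum.
    * by subsum.
    * move=> z /sub_addsmxP[[u1 u2] /= ->]; rewrite !bfDl.
      have [h1 h2] := orth _ (submx_trans (submxMl u1 X') X'C').
      rewrite h1 h2 (bfC A _ e) (bfC A _ f) !CD ?submxMl ?addr0 //.
    * by subsum.
have [d3|d3] := leqP 3 (\rank D).
  (* split a hyperbolic pair off D *)
  have [e [eD e0 Qe]] := sing_exists A char2 d3.
  have [w [wD bw]] := nonzero_pair ndD eD e0.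
  have [f [fD Qf bef]] := pair_make char2 eD Qe wD bw.
  have [D'D dec orth rk] := split_pair char2 eD fD bef.
  set D' := (D :&: perp A e :&: perp A f)%MS in D'D dec orth rk.
  have ndD' : nd A D'.
    move=> v vD' H; apply: ndD; first exact: submx_trans vD' D'D.
    exact: perp_lift dec (proj1 (orth v vD')) (proj2 (orth v vD')) H.
  have hN' : (\rank C + \rank D' <= N)%N by move: hN rk; clear; lia.
  have hk' : (\rank C + \rank D')%N = (k.-1).*2.+1 by move: hk rk r2; clear; lia.
  have [X [XC rX CX wX]] := IH C D' hN' rC
    (fun c d cC dD => CD c d cC (submx_trans dD D'D)) radC ndD' r2 k.-1 hk' dl.
  exists X; split => //.
  rewrite (@witt_hyp _ _ _ char2 _ (X + D')%MS e f) //.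
  - by rewrite wX; move: hk rk r2 d3; clear; case: dl; lia.
  - by apply: addsmxS.
  - exact: subR.
  - exact: subR.
  - move=> z /sub_addsmxP[[u1 u2] /= ->]; rewrite !bfDl.
    have [h1 h2] := orth _ (submxMl u2 D').
    by rewrite h1 h2 !CD ?(submx_trans (submxMl _ _) XC) ?addr0.
  - rewrite addsmx_sub; apply/andP; split; first by subsum.
    apply: submx_trans dec _; subsum.
have rr : \rank r = 1%N by rewrite rank_rV r0.
have : ~~ (C <= r)%MS by apply: contraTN r2 => /mxrankS; rewrite rr; clear; lia.
case/exists_notsub=> c [cC cr].
have [w [wC bw]] : exists w, (w <= C)%MS /\ bf c w != 0.
  have [H|H] := boolP [exists w : 'rV[F]_n, (w <= C)%MS && (bf c w != 0)].
    by case/existsP: H => w /andP[wC bw]; exists w.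
  case/negP: cr; apply: radC => // w wC; apply/eqP; apply: contraNT H => bw.
  by apply/existsP; exists w; rewrite wC.
set y := (bf c w)^-1 *: w.
have yC : (y <= C)%MS by rewrite scalemx_sub.
have bcy : bf c y = 1 by rewrite bfZr mulVf.
clearbody y.
have [C''C decC orthC rkC] := split_pair char2 cC yC bcy.
set C'' := (C :&: perp A c :&: perp A y)%MS in C''C decC orthC rkC.
have rC'' : (r <= C'')%MS.
  by rewrite /C'' !sub_capmx rC; apply/andP; split; [apply/andP; split=> //|]; apply/perpP.
have C''r : (C'' <= r)%MS.
  rewrite -(mxrank_leqif_sup rC''); apply/eqP; apply: anti_leq.
  by move: (mxrankS rC'') rkC r4; rewrite rr; clear; lia.
have rC3 : \rank C = 3%N.
  by move: rkC (mxrankS rC'') (mxrankS C''r); rewrite rr; clear; lia.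
have mkX : forall a b : F, exists x', exists y', [/\ (x' <= C)%MS, (y' <= C)%MS,
    Q x' = a, Q y' = b & [/\ bf x' y' = 1, ~~ (r <= x' + y')%MS & (C <= (x' + y') + r)%MS]].
  move=> a b.
  have [p1 hp1] := adjust char2 c a Qr rad; have [p2 hp2] := adjust char2 y b Qr rad.
  exists (c + p1 *: r), (y + p2 *: r); split => //; rewrite ?addmx_sub ?scalemx_sub //.
  have bxy : bf (c + p1 *: r) (y + p2 *: r) = 1.
    by rewrite !bfDl !bfDr !bfZl !bfZr ?rad (bfC A c r) ?rad bcy !mulr0 !addr0.
  split => //.
  - apply/negP => /sub2P[al [be E]].
    have h1 := congr1 (fun z => bf z (y + p2 *: r)) E.
    have h2 := congr1 (fun z => bf z (c + p1 *: r)) E.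
    move: h1 h2 => /=; rewrite rad !bfDl !bfZl bxy (bfC A (y + _)) bxy !bfxx' rad.
    rewrite !mulr0 !mulr1 !addr0 !add0r => al0 be0.
    by move: E r0; rewrite -al0 -be0 !scale0r addr0 => ->; rewrite eqxx.
  - apply: submx_trans decC _; rewrite !addsmx_sub -andbA; apply/and3P; split.
    + apply: submx_trans C''r _; exact: subR.
    + have ex : c = (c + p1 *: r) - p1 *: r by rewrite addrK.
      by rewrite [X in (X <= _)%MS]ex addmx_sub ?eqmx_opp ?scalemx_sub //; subsum.
    + have ex : y = (y + p2 *: r) - p2 *: r by rewrite addrK.
      by rewrite [X in (X <= _)%MS]ex addmx_sub ?eqmx_opp ?scalemx_sub //; subsum.
have [c0 hc0] := AS_exists char2.
have Z0 : witt_index A (0 : 'M[F]_n) = 0%N.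
  by apply: witt0 => z; rewrite submx0 => /eqP.
have [D0|Dn0] := eqVneq D 0.
  have k1 : k = 1%N by move: hk rC3; rewrite D0 mxrank0; clear; lia.
  rewrite D0 k1; case: dl.
    have [x' [y' [x'C y'C Qx Qy [bxy rX CX]]]] := mkX 1 c0.
    exists (x' + y')%MS; split => //; first by rewrite addsmx_sub x'C y'C.
    apply: witt0 => z zX.
    apply: (aniso_plane char2 hc0 Qx Qy bxy).
    by apply: submx_trans zX _; rewrite addsmx_sub submx_refl sub0mx.
  have [x' [y' [x'C y'C Qx Qy [bxy rX CX]]]] := mkX 0 0.
  exists (x' + y')%MS; split => //; first by rewrite addsmx_sub x'C y'C.
  rewrite (@witt_hyp _ _ _ char2 _ (0 : 'M[F]_n) x' y') ?Z0 //; try subsum.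
  by move=> z; rewrite submx0 => /eqP ->; rewrite !bf0l.
have : ~~ (D <= (0 : 'M[F]_n))%MS by rewrite submx0.
case/exists_notsub=> u [uD]; rewrite submx0 => u0.
have [w0 [w0D bw0]] := nonzero_pair ndD uD u0.
set v := (bf u w0)^-1 *: w0.
have vD : (v <= D)%MS by rewrite scalemx_sub.
have buv : bf u v = 1 by rewrite bfZr mulVf.
clearbody v.
have [D''D decD orthD rkD] := split_pair char2 uD vD buv.
set D'' := (D :&: perp A u :&: perp A v)%MS in D''D decD orthD rkD.
have D''0 : D'' = 0.
  apply/eqP; rewrite -mxrank_eq0; move: rkD d3; clear; lia.
have rD2 : \rank D = 2%N by rewrite rkD D''0 mxrank0.
have k2 : k = 2%N by move: hk rC3 rD2; clear; lia.
have DS : (D <= u + v)%MS by apply: submx_trans decD _; rewrite D''0; subsum.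
have CDl : forall z d, (z <= C)%MS -> (d <= D)%MS -> bf d z = 0.
  by move=> z d zC dD; rewrite bfC CD.
rewrite k2; case: dl; last first.
  have [x' [y' [x'C y'C Qx Qy [bxy rX CX]]]] := mkX (Q u) (Q v).
  exists (x' + y')%MS; split => //; first by rewrite addsmx_sub x'C y'C.
  by apply: (mirror_witt char2 bxy buv Qx Qy) => //; apply: CD.
have [iso|aniso] := boolP [exists z : 'rV[F]_n, [&& (z <= D)%MS, (z != 0) & (Q z == 0)]].
  case/existsP: iso => e0 /and3P[e0D e00 /eqP Qe0].
  have [w1 [w1D bw1]] := nonzero_pair ndD e0D e00.
  have [f0 [f0D Qf0 bef0]] := pair_make char2 e0D Qe0 w1D bw1.
  have [D0D decD0 orthD0 rkD0] := split_pair char2 e0D f0D bef0.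
  set D0 := (D :&: perp A e0 :&: perp A f0)%MS in D0D decD0 orthD0 rkD0.
  have D00 : D0 = 0.
    by apply/eqP; rewrite -mxrank_eq0; move: rkD0 rD2; clear; lia.
  have [x' [y' [x'C y'C Qx Qy [bxy rX CX]]]] := mkX 1 c0.
  exists (x' + y')%MS; split => //; first by rewrite addsmx_sub x'C y'C.
  rewrite (@witt_hyp _ _ _ char2 _ (x' + y')%MS e0 f0) //; try subsum.
  - rewrite (_ : witt_index A (x' + y')%MS = 0%N) //; apply: witt0 => z zX.
    exact: (aniso_plane char2 hc0 Qx Qy bxy).
  - move=> z /sub2P[g [h ->]]; rewrite !bfDl !bfZl !CD //.
    by rewrite !mulr0 addr0.
  - rewrite addsmx_sub; apply/andP; split; first by subsum.
    by apply: submx_trans decD0 _; rewrite D00; subsum.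
have [x' [y' [x'C y'C Qx Qy [bxy rX CX]]]] := mkX 0 0.
exists (x' + y')%MS; split => //; first by rewrite addsmx_sub x'C y'C.
rewrite (@witt_hyp _ _ _ char2 _ D x' y') //; try subsum.
- rewrite (_ : witt_index A D = 0%N) //; apply: witt0 => z zD Qz.
  apply/eqP; apply: contraNT aniso => z0; apply/existsP; exists z.
  by rewrite zD z0 Qz eqxx.
- by move=> z zD; rewrite !CDl.
Qed.

End Main.


Section Semi.
Variables (F : finFieldType) (n : nat) (g : 'M[F]_n.+1).
Hypothesis ss : semisimple_mx g.

Lemma hmxM (a b : {poly F}) : horner_mx g (a * b) = horner_mx g a *m horner_mx g b.
Proof. by rewrite rmorphM. Qed.

Lemma hmx_comm (a b : {poly F}) : horner_mx g a *m horner_mx g b = horner_mx g b *m horner_mx g a.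
Proof. by rewrite -!hmxM mulrC. Qed.

Lemma hmx1 : horner_mx g 1 = 1%:M.
Proof. by rewrite -(horner_mx_C g). Qed.

Lemma hmxU : horner_mx g ('X - 1%:P) = g - 1%:M.
Proof. by rewrite rmorphB /= horner_mx_X horner_mx_C. Qed.

Lemma semi_ker k (Y : 'M[F]_(k, n.+1)) :
  Y *m (g - 1%:M) *m (g - 1%:M) = 0 -> Y *m (g - 1%:M) = 0.
Proof.
move=> H; rewrite -hmxU in H *; set U := horner_mx g _ in H *.
set p := mxminpoly g; have p0 : horner_mx g p = 0 := mx_root_minpoly g.
have [r1|nr1] := boolP (root p 1).
  set h := p %/ ('X - 1%:P).
  have ph : p = h * ('X - 1%:P) by rewrite divpK // dvdp_XsubCl.
  have cop : coprimep ('X - 1%:P) h.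
    by apply: (separable_coprime ss); rewrite mulrC -ph dvdpp.
  case/Bezout_eq1_coprimepP: cop => [[a b]] /= E.
  have := congr1 (horner_mx g) E; rewrite rmorphD /= !hmxM rmorph1 -/U => E1.
  move: E1 => /(congr1 (mulmx (Y *m U))); rewrite hmx1 mulmx1 => <-; rewrite mulmxDr !mulmxA.
  have t1 : Y *m U *m horner_mx g a *m U = 0.
    by rewrite -!mulmxA [horner_mx g a *m U]hmx_comm !mulmxA H !mul0mx.
  have t2 : Y *m U *m horner_mx g b *m horner_mx g h = 0.
    rewrite -!mulmxA [U *m (_ *m _)]mulmxA [U *m horner_mx g b]hmx_comm -mulmxA.
    by rewrite [U *m horner_mx g h]hmx_comm -(hmxM h) -ph p0 !mulmx0.
  by rewrite t1 t2 addr0.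
have cop : coprimep p ('X - 1%:P) by rewrite coprimep_XsubC.
case/Bezout_eq1_coprimepP: cop => [[a b]] /= E.
have := congr1 (horner_mx g) E; rewrite rmorphD /= !hmxM rmorph1 p0 mulmx0 add0r -/U => E1.
move: E1 => /(congr1 (mulmx (Y *m U))); rewrite hmx1 mulmx1 => <-.
by rewrite -!mulmxA [horner_mx g b *m U]hmx_comm !mulmxA H !mul0mx.
Qed.
End Semi.


Section Final.
Variables (F : finFieldType) (n : nat) (A : 'M[F]_n).
Hypothesis char2 : (2%N \in [pchar F]).
Local Notation Q := (qform A).
Local Notation bf := (bf A).
Local Notation bfxx' := (bfxx A char2).
Implicit Types (v w x e f r : 'rV[F]_n) (U W S C D X : 'M[F]_n).

Lemma radicalP v : reflect (forall w, bf v w = 0) (v <= radical A)%MS.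
Proof.
apply: (iffP sub_kermxP) => [H w|H].
  by rewrite /bf H mul0mx mxE.
apply/matrixP => i j; rewrite (ord1 i) [RHS]mxE.
have := H (delta_mx 0 j); rewrite /bf trmx_delta -colE.
by rewrite [(col _ _) _ _]mxE.
Qed.

Lemma nd_even S : nd A S -> ~~ odd (\rank S).
Proof.
move: {2}(\rank S).+1 (ltnSn (\rank S)) => N; elim: N S => // N IH S hS ndS.
have [r3|r3] := leqP 3 (\rank S).
  have [e [eS e0 Qe]] := sing_exists A char2 r3.
  have [w [wS bw]] := nonzero_pair ndS eS e0.
  have [f [fS Qf bef]] := pair_make char2 eS Qe wS bw.
  have [S'S dec orth rk] := split_pair char2 eS fS bef.
  set S' := (S :&: perp A e :&: perp A f)%MS in S'S dec orth rk.
  have ndS' : nd A S'.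
    move=> v vS' H; apply: ndS; first exact: submx_trans vS' S'S.
    exact: perp_lift dec (proj1 (orth v vS')) (proj2 (orth v vS')) H.
  have hS' : (\rank S' < N)%N by move: hS rk; clear; lia.
  by have := IH S' hS' ndS'; rewrite rk /= negbK.
have [r1|r1] := eqVneq (\rank S) 1%N; last by move: r1 r3; clear; case: (\rank S) => [|[|[|]]].
exfalso.
have : ~~ (S <= (0 : 'M[F]_n))%MS by rewrite submx0 -mxrank_eq0 r1.
case/exists_notsub=> v [vS]; rewrite submx0 => v0.
have [w [wS bw]] := nonzero_pair ndS vS v0.
have wv : ~~ (w <= v)%MS.
  by apply: contra bw => /sub_rVP[c ->]; rewrite bfZr bfxx' mulr0.
have : (\rank (v + w)%MS <= \rank S)%N by rewrite mxrankS // addsmx_sub vS wS.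
by rewrite addv_rank // rank_rV v0 r1.
Qed.

End Final.


Unset Implicit Arguments.
Set Strict Implicit.
Theorem mainTheorem18 (F : finFieldType) (m : nat)
    (A : 'M[F]_(m.*2.+1)) (g : 'M[F]_(m.*2.+1)) :
  (2%N \in [pchar F]) ->
  nonsingular_qf A ->
  isometry_qf A g ->
  semisimple_mx g ->
  (2 <= \rank (fixed_space g))%N ->
  (exists W : 'M[F]_(m.*2.+1),
      [/\ nondeg_hyperplane A W, stablemx W g & witt_index A W = m]) /\
  (exists W : 'M[F]_(m.*2.+1),
      [/\ nondeg_hyperplane A W, stablemx W g & witt_index A W = m.-1]).
Proof.
move=> char2 ns [gU gQ] ss r2.
set R := radical A.
have gB : forall u v : 'rV[F]_(m.*2.+1), bf A (u *m g) (v *m g) = bf A u v.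
  move=> u v; have h := qformD A (u *m g) (v *m g).
  rewrite -mulmxDl !gQ qformD in h; exact: esym (addrI _ h).
have radg : forall v : 'rV[F]_(m.*2.+1), (v <= R)%MS -> (v *m g <= R)%MS.
  move=> v /(radicalP A) H; apply/(radicalP A) => w.
  by rewrite -[w](mulmxKV gU) gB H.
have Rn0 : ~~ (R <= (0 : 'M_(m.*2.+1)))%MS.
  apply/negP => R0.
  have nd1 : nd A 1%:M.
    move=> v _ H; apply/eqP; rewrite -submx0; apply: submx_trans R0.
    by apply/(radicalP A) => w; apply: H; exact: submx1.
  by have := nd_even char2 nd1; rewrite mxrank1 /= odd_double.
case/exists_notsub: Rn0 => r [rR]; rewrite submx0 => r0.
have rad : forall w, bf A r w = 0 by apply/(radicalP A).
have Qr : qform A r != 0 by apply: contra r0 => /eqP Q0; apply/eqP; exact: ns rR Q0.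
have Rr : (R <= r)%MS.
  apply: contraT => /exists_notsub[v [vR vr]].
  have [l hl] := sqrtF char2 (qform A v / qform A r).
  have zR : ((l *: r + v)%R <= R)%MS by rewrite addmx_sub ?scalemx_sub.
  have : qform A (l *: r + v) = 0.
    by rewrite qformD qformZ hl divfK // bfZl rad mulr0 addr0 addxx.
  move/(ns _ zR) => E; case/negP: vr.
  have -> : v = - (l *: r) by apply/eqP; rewrite -addr_eq0 addrC E.
  by rewrite eqmx_opp scalemx_sub.
have rg : r *m g = r.
  have /sub_rVP[c E] : (r *m g <= r)%MS by apply: submx_trans (radg r rR) Rr.
  have : c ^+ 2 = 1 ^+ 2.
    have := gQ r; rewrite E qformZ expr1n => /eqP.
    rewrite -subr_eq0 -{2}[qform A r]mul1r -mulrBl mulf_eq0 (negbTE Qr) orbF subr_eq0.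
    by move/eqP.
  by move/(sq_inj char2) => c1; rewrite E c1 scale1r.
set C := fixed_space g; set D := g - 1%:M.
have Cfix : forall k (M : 'M[F]_(k, m.*2.+1)), (M <= C)%MS -> M *m g = M.
  move=> k M /sub_kermxP; rewrite mulmxBr mulmx1 => /eqP; rewrite subr_eq0 => /eqP //.
have rC : (r <= C)%MS by apply/sub_kermxP; rewrite mulmxBr mulmx1 rg subrr.
have CD0 : forall v : 'rV[F]_(m.*2.+1), (v <= C)%MS -> (v <= D)%MS -> v = 0.
  move=> v vC /submxP[y Ey]; move/sub_kermxP: vC; rewrite Ey => H.
  exact: (semi_ker ss H).
have rkCD : (\rank C + \rank D)%N = m.*2.+1.
  by rewrite /C /fixed_space mxrank_ker -/D; have := rank_leq_row D; clear; lia.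
have CDfull : (1%:M <= C + D)%MS.
  rewrite sub1mx /row_full; apply/eqP.
  have := mxrank_sum_cap C D; rewrite rkCD.
  have -> : \rank (C :&: D)%MS = 0%N.
    apply/eqP; rewrite mxrank_eq0 -submx0; apply/row_subP => i.
    have := row_sub i (C :&: D)%MS; rewrite sub_capmx => /andP[h1 h2].
    by rewrite (CD0 _ h1 h2) sub0mx.
  by rewrite addn0.
have CD : forall c d : 'rV[F]_(m.*2.+1), (c <= C)%MS -> (d <= D)%MS -> bf A c d = 0.
  move=> c d cC /submxP[y ->]; rewrite /D mulmxBr mulmx1 bfBr.
  by rewrite -{1}(Cfix _ _ cC) gB subrr.
have radC : forall c : 'rV[F]_(m.*2.+1), (c <= C)%MS -> (forall c' : 'rV[F]_(m.*2.+1), (c' <= C)%MS -> bf A c c' = 0) -> (c <= r)%MS.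
  move=> c cC H; apply: submx_trans Rr; apply/(radicalP A) => w.
  have := submx_trans (submx1 w) CDfull; case/sub_addsmxP=> [[u1 u2] /= ->].
  by rewrite bfDr H ?submxMl // CD ?submxMl // addr0.
have ndD : nd A D.
  move=> d dD H; have dD2 := dD; apply: CD0 dD; apply: submx_trans rC; apply: submx_trans Rr.
  apply/(radicalP A) => w; have := submx_trans (submx1 w) CDfull; case/sub_addsmxP=> [[u1 u2] /= ->].
  by rewrite bfDr (H (u2 *m D)) ?submxMl // (bfC A d) (CD _ _ (submxMl _ _) dD2) addr0.
have fin : forall dl : bool, exists W : 'M[F]_(m.*2.+1),
    [/\ nondeg_hyperplane A W, stablemx W g & witt_index A W = (m - dl)%N].
  move=> dl.
  have [X [XC rX CX wX]] := main_ind char2 Qr rad (leqnn _) rC CD radC ndD r2 rkCD dl.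
  exists (X + D)%MS; split => //; last first.
    rewrite addsmxMr (Cfix _ _ XC) addsmxS // /D mulmxBl mul1mx.
    have -> : g *m g - g = g *m (g - 1%:M) by rewrite mulmxBr mulmx1.
    exact: submxMl.
  split; apply/andP; split; rewrite ?sub0mx ?submx1 //.
    apply/row_subP => i; set z := row i _.
    have : (z <= (X + D) :&: R)%MS := row_sub i _.
    rewrite sub_capmx => /andP[zW /(submx_trans)/(_ Rr)/sub_rVP[c Ez]].
    rewrite submx0 Ez; have [->|c0] := eqVneq c 0; first by rewrite scale0r.
    have rW : (r <= X + D)%MS.
      by rewrite -(scalerK c0 r) -Ez scalemx_sub.
    case/negP: rX; case/sub_addsmxP: rW => [[u1 u2] /= Er].
    have d0 : u2 *m D = 0.
      apply: CD0; last exact: submxMl.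
      have -> : u2 *m D = r - u1 *m X by rewrite Er addrC addKr.
      by rewrite addmx_sub ?eqmx_opp // (submx_trans (submxMl _ _) XC).
    by rewrite Er d0 addr0 submxMl.
  apply: submx_trans CDfull _; rewrite addsmx_sub; apply/andP; split.
    apply: submx_trans CX _; apply: addsmxS => //; exact: addsmxSl.
  by apply: subL; exact: addsmxSr.
split.
  by have [W HW] := fin false; exists W; rewrite subn0 in HW.
by have [W HW] := fin true; exists W; rewrite subn1 in HW.
Qed.
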